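(* Let $G=(V,E)$ be a finite directed acyclic graph, $G'=(V,E')$ its minimum equivalent graph, and $f:V\to S$ a stream assignment satisfying maximum logical concurrency on $G'$. Then $\mathrm{min}_{sync}(G',f)=|E'|-|Q(f)|$.
   Context: A path from $u$ to $v$ in a directed graph is a nonempty sequence of edges $(u,w_1),\dots,(w_k,v)$ of that graph. The minimum equivalent graph (MEG) of a finite DAG $G=(V,E)$ is the subgraph $G'=(V,E')$, $E'\subseteq E$, with the same vertex set and the smallest number of edges among subgraphs having the same reachability relation as $G$. A stream assignment is a function $f:V\to S$ into a set of streams $S$; it satisfies maximum logical concurrency on $G'$ if for all distinct $u,v\in V$ with no path between them in either direction in $G'$, $f(u)\neq f(v)$. A synchronization plan $\Lambda\subseteq E'$ is safe for $f$ on $G'$ if for every edge $(u,v)\in E'$, either $f(u)=f(v)$ or there is a path $P\subseteq E'$ from $u$ to $v$ with $P\cap\Lambda\neq\emptyset$; $\mathrm{min}_{sync}(G',f)=\min\{|\Lambda| : \Lambda\subseteq E' \text{ safe for } f \text{ on } G'\}$. Define $Q(f)=\{v\in V : \exists p\in V \text{ with } (p,v)\in E' \text{ and } f(p)=f(v)\}$. *)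

(* Defs.v *)
From mathcomp Require Import all_boot.
From Stdlib Require Import ClassicalEpsilon.
Set Implicit Arguments. Unset Strict Implicit. Unset Printing Implicit Defensive.

Section Graphs.
Variable V : finType.

Definition edge_rel (E : {set V * V}) : rel V := fun x y => (x, y) \in E.

Definition walk_edges (u : V) (p : seq V) : seq (V * V) := zip (u :: p) p.

(* A path from u to v in E: a NONEMPTY sequence of edges of E
   (u,w1),(w1,w2),...,(wk,v), encoded by the vertex list p = [w1;..;wk;v]. *)
Definition is_path (E : {set V * V}) (u v : V) (p : seq V) : Prop :=
  [/\ p != [::], path (edge_rel E) u p & last u p = v].

Definition reach (E : {set V * V}) (u v : V) : Prop :=
  exists p, is_path E u v p.

Definition acyclic (E : {set V * V}) : Prop := forall u, ~ reach E u u.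

Definition same_reach (E1 E2 : {set V * V}) : Prop :=
  forall u v, reach E1 u v <-> reach E2 u v.

Definition is_MEG (E E' : {set V * V}) : Prop :=
  [/\ E' \subset E, same_reach E E' &
      forall E'' : {set V * V}, E'' \subset E -> same_reach E E'' ->
        #|E'| <= #|E''| ].

Variable S : eqType.

Definition max_logical_concurrency (E' : {set V * V}) (f : V -> S) : Prop :=
  forall u v, u != v -> ~ reach E' u v -> ~ reach E' v u -> f u != f v.

Definition safe_plan (E' : {set V * V}) (f : V -> S) (L : {set V * V}) : Prop :=
  L \subset E' /\
  forall u v, (u, v) \in E' ->
    f u = f v \/
    exists p, is_path E' u v p /\ has (fun e => e \in L) (walk_edges u p).

Definition safe_planb (E' : {set V * V}) (f : V -> S) (L : {set V * V}) : bool :=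
  if excluded_middle_informative (safe_plan E' f L) then true else false.

(* min_sync(E', f) = min { |L| : L safe for f on E' }.  Every safe plan is a
   subset of E', and E' itself is safe, so #|E'| is a harmless neutral
   element for the minimum. *)
Definition min_sync (E' : {set V * V}) (f : V -> S) : nat :=
  \big[minn/#|E'|]_(L : {set V * V} | safe_planb E' f L) #|L|.

Definition Qset (E' : {set V * V}) (f : V -> S) : {set V} :=
  [set v | [exists p, ((p, v) \in E') && (f p == f v)]].

End Graphs.

(* Main.v *)
Require Import Defs.
From mathcomp Require Import all_boot.
From Stdlib Require Import ClassicalEpsilon.
Set Implicit Arguments. Unset Strict Implicit. Unset Printing Implicit Defensive.

Section L.
Variable V : finType.
Implicit Types E : {set V * V}.

Lemma is_path_cat E u v w p q : is_path E u v p -> is_path E v w q ->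
  is_path E u w (p ++ q).
Proof.
case=> p0 pp pl [q0 qp ql]; split.
- by case: p p0 {pp pl}.
- by rewrite cat_path pp pl.
- by rewrite last_cat pl.
Qed.

Lemma reach_edge E u v : (u, v) \in E -> reach E u v.
Proof. by move=> h; exists [:: v]; split => //=; rewrite /edge_rel h. Qed.

Lemma reach_trans E u v w : reach E u v -> reach E v w -> reach E u w.
Proof. by case=> p hp [q hq]; exists (p ++ q); apply: is_path_cat hp hq. Qed.

Lemma reach_mono E1 E2 : E1 \subset E2 -> forall u v, reach E1 u v -> reach E2 u v.
Proof.
move=> sub u v [p [p0 pp pl]]; exists p; split=> //.
apply: sub_path pp => x y; rewrite /edge_rel; exact: (subsetP sub).
Qed.

Lemma reach_of_edges E1 E2 : (forall a b, (a,b) \in E1 -> reach E2 a b) ->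
  forall u v, reach E1 u v -> reach E2 u v.
Proof.
move=> h u v [p [p0 pp pl]]; subst v.
elim: p u p0 pp => [//|a q IH] u _ /= /andP[ua aq].
case: q IH aq => [|b q] IH aq; first exact: h.
exact: reach_trans (h _ _ ua) (IH a isT aq).
Qed.

Variables (S : eqType) (E E' : {set V*V}) (f : V -> S).
Hypotheses (acE : acyclic E) (meg : is_MEG E E').

Lemma acE' : acyclic E'.
Proof. move=> u r; apply: (acE (u:=u)); case: meg => _ sr _; exact: (sr u u).2. Qed.

Lemma split_path u v x q : path (edge_rel E') x q -> q != [::] ->
  reach (E' :\ (u,v)) x (last x q) \/ (x = u \/ reach E' x u).
Proof.
elim: q x => [//|a q IH] x /= /andP[xa aq] _.
case: (eqVneq (x,a) (u,v)) => [[-> _]|ne]; first by right; left.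
have xaE : (x,a) \in E' :\ (u,v) by rewrite in_setD1 ne; exact: xa.
case: q IH aq => [|b q] IH aq; first by left; apply: reach_edge.
case: (IH a aq isT) => [r|[au|r]]; first by left; exact: reach_trans (reach_edge xaE) r.
- by right; right; rewrite -au; apply: reach_edge.
- by right; right; exact: reach_trans (reach_edge xa) r.
Qed.

Lemma tred u v p : (u,v) \in E' -> is_path E' u v p -> p = [:: v].
Proof.
move=> uv [p0 pp pl].
case: p p0 pp pl => [//|w p'] _ /= /andP[uw wp'] pl.
case: p' wp' pl => [|b q] wp' pl; first by rewrite /= in pl; rewrite pl.
exfalso.
have Hreach : reach (E' :\ (u,v)) u v.
  case: (eqVneq w v) => [wv|wv].
  - subst w; exfalso; apply: (acE' (u:=v)); exists (b::q); split=> //.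
  - have uwE : (u,w) \in E' :\ (u,v) by rewrite in_setD1 xpair_eqE eqxx (negbTE wv); exact: uw.
    case: (split_path u v wp' isT) => [r|[wu|r]].
    + apply: reach_trans (reach_edge uwE) _; by move: r; rewrite pl.
    + by exfalso; subst w; apply: (acE' (u:=u)); apply: reach_edge.
    + by exfalso; apply: (acE' (u:=u)); exact: reach_trans (reach_edge uw) r.
case: meg => sub sr mn.
have sub'' : E' :\ (u,v) \subset E by apply: subset_trans (subD1set _ _) sub.
have sr'' : same_reach E (E' :\ (u,v)).
  move=> x y; split => r.
  - apply: (reach_of_edges _ ((sr x y).1 r)) => a c ac.
    case: (eqVneq (a,c) (u,v)) => [[-> ->]//|ne].
    by apply: reach_edge; rewrite in_setD1 ne ac.
  - exact: reach_mono sub'' _ _ r.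
move: (mn _ sub'' sr''); by rewrite (cardsD1 (u,v) E') uv add1n ltnn.
Qed.

Definition D := [set e in E' | f e.1 != f e.2].
Definition C := [set e in E' | f e.1 == f e.2].

Lemma safe_iff L : safe_plan E' f L <-> (L \subset E') && (D \subset L).
Proof.
split=> [[sL h] | /andP[sL h]].
- rewrite sL /=; apply/subsetP => [[u v]]; rewrite inE /= => /andP[uv neq].
  case: (h u v uv) => [eq|[p [pp hp]]]; first by rewrite eq eqxx in neq.
  by move: hp; rewrite (tred uv pp) /= orbF.
- split=> // u v uv.
  case: (eqVneq (f u) (f v)) => [eq|neq]; [by left | right].
  exists [::v]; split; first by split=> //=; rewrite /edge_rel uv.
  by rewrite /= orbF; apply: (subsetP h); rewrite inE uv.
Qed.

Lemma safeb L : safe_planb E' f L = (L \subset E') && (D \subset L).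
Proof.
rewrite /safe_planb; case: excluded_middle_informative => [h|h].
- by apply/esym; apply/safe_iff.
- by apply/esym/negP => /safe_iff.
Qed.

Lemma DE' : D \subset E'.
Proof. by apply/subsetP => e; rewrite inE => /andP[]. Qed.

Lemma min_syncE : min_sync E' f = #|D|.
Proof.
apply/eqP; rewrite eqn_leq; apply/andP; split.
- rewrite /min_sync.
  have : D \in index_enum (Finite.clone _ {set V * V}) by rewrite mem_index_enum.
  have hD : safe_planb E' f D by rewrite safeb DE' subxx.
  elim: (index_enum _) => [//|x r IH]; rewrite inE big_cons.
  case/orP => [/eqP <-|hr]; first by rewrite hD geq_minl.
  case: ifP => _; last exact: IH.
  by rewrite geq_min IH ?orbT.
- rewrite /min_sync; apply: (big_ind (fun n => #|D| <= n)).
  + exact: subset_leq_card DE'.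
  + by move=> a b ha hb; rewrite leq_min ha hb.
  + by move=> L; rewrite safeb => /andP[_ h]; apply: subset_leq_card.
Qed.

Lemma card_split : #|E'| = #|C| + #|D|.
Proof.
rewrite -(cardsID C E'); congr (_ + _); apply: eq_card => e; rewrite !inE.
- by case: (e \in E'); rewrite ?andbF ?andbT.
- by case: (e \in E'); rewrite ?andbF ?andbT.
Qed.

Hypothesis mlc : max_logical_concurrency E' f.

Lemma QsetE : Qset E' f = [set e.2 | e in C].
Proof.
apply/setP => v; rewrite inE; apply/existsP/imsetP.
- by case=> p h; exists (p, v); rewrite // inE.
- by case=> [[p w]]; rewrite inE /= => h ->; exists p.
Qed.

Lemma cardC : #|C| = #|Qset E' f|.
Proof.
rewrite QsetE card_in_imset // => [[p1 v1]] [p2 v2]; rewrite !inE /=.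
move=> /andP[e1 f1] /andP[e2 f2] ev; subst v2.
case: (eqVneq p1 p2) => [->//|ne]; exfalso.
have hf : f p1 == f p2 by rewrite (eqP f1) (eqP f2).
have noreach a b : (a, v1) \in E' -> reach E' a b -> (b, v1) \in E' -> False.
  move=> ab [q hq] bv.
  have hp : is_path E' a v1 (q ++ [:: v1]).
    by apply: is_path_cat hq _; split=> //=; rewrite /edge_rel bv.
  have := tred ab hp; move/(congr1 size); rewrite size_cat /= addn1.
  case: hq => q0 _ _; clear hp; by case: q q0.
by move: hf; apply/negP/mlc => // r; [exact: noreach e1 r e2 | exact: noreach e2 r e1].
Qed.

End L.

Theorem lemma4 (V : finType) (S : eqType) (E E' : {set V * V}) (f : V -> S) :
  acyclic E -> is_MEG E E' -> max_logical_concurrency E' f ->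
  min_sync E' f = #|E'| - #|Qset E' f|.
Proof.
move=> acE meg mlc.
rewrite (@min_syncE V S E E' f acE meg) (@card_split V S E' f) -(@cardC V S E E' f acE meg mlc).
by rewrite addKn.
Qed.
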